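(* For $m,n\in\mathbb N$ define groups by generators and relations $G_{m,n}=\langle s,t\mid s^2,\ t^m,\ (st^{-1}st)^n\rangle$ and $H_{m,n}=\langle s_1,\dots,s_m,T\mid s_i^2,\ T^m,\ (s_is_{i+1})^n,\ T^{-1}s_iTs_{i+1}\ (1\le i\le m)\rangle$, with the convention $s_{m+1}=s_1$. Then there is a group isomorphism $\varphi:G_{m,n}\to H_{m,n}$ with $\varphi(s)=s_m$ and $\varphi(t)=T$. Moreover, $G_{m,n}$ is finite if and only if $m=1$ or $m=2$ or $n=1$ or $(m,n)=(3,2)$.
   Context: $\mathbb N=\{1,2,3,\dots\}$. A relator $r$ in a presentation means the relation $r=1$. *)

(* Defs.v *)
From mathcomp Require Import all_boot.
From Stdlib Require List.
Set Implicit Arguments.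
Unset Strict Implicit.
Unset Printing Implicit Defensive.

(* Finitely presented groups, encoded via words in generators and their
   inverses modulo the congruence generated by free cancellation and the
   relators.  A letter (a, false) is the generator a, (a, true) is a^-1. *)

Definition word (A : Type) := seq (A * bool).

Definition inv_letter (A : Type) (x : A * bool) : A * bool := (x.1, ~~ x.2).

Definition winv (A : Type) (w : word A) : word A := rev (map (@inv_letter A) w).

(* The congruence on words defining the group < A | R >:
   its equivalence classes (with concatenation) form the presented group. *)
Inductive weq (A : Type) (R : word A -> Prop) : word A -> word A -> Prop :=
  | weq_refl w : weq R w w
  | weq_sym u v : weq R u v -> weq R v u
  | weq_trans u v w : weq R u v -> weq R v w -> weq R u w
  | weq_cancel u x v : weq R (u ++ x :: inv_letter x :: v) (u ++ v)
  | weq_rel u r v : R r -> weq R (u ++ r ++ v) (u ++ v).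

Definition pres_finite (A : Type) (R : word A -> Prop) : Prop :=
  exists l : seq (word A), forall w, exists2 u, List.In u l & weq R w u.

(* a group isomorphism < A | R > -> < B | S >, given on representatives *)
Definition pres_iso (A B : Type) (R : word A -> Prop) (S : word B -> Prop)
  (phi : word A -> word B) : Prop :=
  [/\ (forall u v, weq R u v -> weq S (phi u) (phi v)),
      (forall u v, weq S (phi (u ++ v)) (phi u ++ phi v)),
      (forall u v, weq S (phi u) (phi v) -> weq R u v)
    & (forall w, exists u, weq S (phi u) w)].

Inductive Ggen := gs | gt.

Definition Grel (m n : nat) (r : word Ggen) : Prop :=
  r = [:: (gs, false); (gs, false)] \/
  r = nseq m (gt, false) \/
  r = flatten (nseq n [:: (gs, false); (gt, true); (gs, false); (gt, false)]).

(* generators: Some i (i : 'I_m) stands for s_{i+1}; None stands for T *)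
Definition Hgen (m : nat) := option 'I_m.

Definition nextIdx (m : nat) (hm : 0 < m) (i : 'I_m) : 'I_m :=
  Ordinal (ltn_pmod i.+1 hm).

Lemma lastIdx_proof (m : nat) (hm : 0 < m) : m.-1 < m.
Proof. by rewrite ltn_predL. Qed.

Definition lastIdx (m : nat) (hm : 0 < m) : 'I_m := Ordinal (lastIdx_proof hm).

Definition Hrel (m n : nat) (hm : 0 < m) (r : word (Hgen m)) : Prop :=
  r = nseq m (None, false) \/
  exists i : 'I_m,
    r = [:: (Some i, false); (Some i, false)] \/
    r = flatten (nseq n [:: (Some i, false); (Some (nextIdx hm i), false)]) \/
    r = [:: (None, true); (Some i, false); (None, false); (Some (nextIdx hm i), false)].

(* Main.v *)
Require Import Defs.
From mathcomp Require Import all_boot all_algebra.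
From mathcomp Require Import ring.
From Stdlib Require Import Setoid Morphisms.
Set Implicit Arguments.
Unset Strict Implicit.

Section Weq.
Variables (A : Type) (R : word A -> Prop).
Implicit Types u v w : word A.
Local Notation "u ~~ v" := (weq R u v) (at level 70).

Global Instance weq_Equiv : Equivalence (weq R).
Proof. split; [exact: weq_refl| exact: weq_sym | exact: weq_trans]. Qed.

Lemma weq_catl a {u u'} : weq R u u' -> weq R (a ++ u) (a ++ u').
Proof.
elim=> {u u'} [w|u v _ IH|u v w _ IH1 _ IH2|u x v|u r v Hr].
- reflexivity.
- by symmetry.
- by rewrite IH1.
- by rewrite !catA; apply: weq_cancel.
- by rewrite !catA -(catA _ r); apply: weq_rel.
Qed.

Lemma weq_catr a {u u'} : weq R u u' -> weq R (u ++ a) (u' ++ a).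
Proof.
elim=> {u u'} [w|u v _ IH|u v w _ IH1 _ IH2|u x v|u r v Hr].
- reflexivity.
- by symmetry.
- by rewrite IH1.
- by rewrite -!catA /=; apply: weq_cancel.
- by rewrite -!catA; apply: weq_rel.
Qed.

Global Instance weq_cat_Proper : Proper (weq R ==> weq R ==> weq R) (@cat _).
Proof. move=> u u' Hu v v' Hv; rewrite (weq_catr v Hu); exact: weq_catl. Qed.

Global Instance weq_cons_Proper x : Proper (weq R ==> weq R) (cons x).
Proof. move=> u u' H; exact: (weq_catl [:: x] H). Qed.

Lemma wcancel x r : weq R (x :: inv_letter x :: r) r.
Proof. exact: (@weq_cancel A R [::] x r). Qed.

Lemma wcancel' x r : weq R (inv_letter x :: x :: r) r.
Proof. have := wcancel (inv_letter x) r; by case: x => a b /=; rewrite /inv_letter /= negbK. Qed.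

Lemma wrel r v : R r -> weq R (r ++ v) v.
Proof. move=> Hr; exact: (@weq_rel A R [::] r v Hr). Qed.

End Weq.



Lemma nseqSr (T : Type) k (x : T) : nseq k.+1 x = nseq k x ++ [:: x].
Proof. by elim: k => //= k ->. Qed.

Lemma flatten_nseqS (T : Type) k (b : seq T) : flatten (nseq k.+1 b) = b ++ flatten (nseq k b).
Proof. by []. Qed.

Section WeqMore.
Variables (A : Type) (R : word A -> Prop).

Lemma nseq_cancel k x r : weq R (nseq k x ++ nseq k (inv_letter x) ++ r) r.
Proof.
elim: k r => [|k IH] r; first reflexivity.
rewrite [nseq k.+1 (inv_letter x)]nseqSr -catA /= (IH (inv_letter x :: r)); exact: wcancel.
Qed.

Lemma inv_letterK (x : A * bool) : inv_letter (inv_letter x) = x.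
Proof. by case: x => a b; rewrite /inv_letter /= negbK. Qed.

Lemma nseq_cancel' k x r : weq R (nseq k (inv_letter x) ++ nseq k x ++ r) r.
Proof. have := nseq_cancel k (inv_letter x) r; by rewrite inv_letterK. Qed.

Lemma rel_inv a k r : R (nseq k (a, false)) -> 0 < k ->
  weq R ((a, true) :: r) (nseq k.-1 (a, false) ++ r).
Proof.
move=> HR; case: k HR => // k HR _.
rewrite -{1}(wrel r HR) /=; exact: (wcancel' R (a, false) (nseq k (a, false) ++ r)).
Qed.

Lemma flat_cong X Y : (forall v, weq R (X ++ v) (Y ++ v)) ->
  forall k v, weq R (flatten (nseq k X) ++ v) (flatten (nseq k Y) ++ v).
Proof.
move=> H; elim=> [|k IH] v /=; first reflexivity.
rewrite -!catA IH H; reflexivity.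
Qed.

Lemma flat_conj X Y P Q : (forall v, weq R (X ++ v) (P ++ Y ++ Q ++ v)) ->
  (forall v, weq R (Q ++ P ++ v) v) -> (forall v, weq R (P ++ Q ++ v) v) ->
  forall k v, weq R (flatten (nseq k X) ++ v) (P ++ flatten (nseq k Y) ++ Q ++ v).
Proof.
move=> H HQP HPQ; elim=> [|k IH] v /=; first by rewrite HPQ; reflexivity.
rewrite -!catA IH H HQP; reflexivity.
Qed.
End WeqMore.

Notation S := (gs, false).
Notation Si := (gs, true).
Notation T := (gt, false).
Notation Ti := (gt, true).
Definition blk := [:: S; Ti; S; T].

Section Iso.
Variables (m n : nat) (hm : 0 < m).
Local Notation HR := (Hrel n hm).
Local Notation GR := (Grel m n).
Local Notation sm := (Some (lastIdx hm)).
Local Notation nx := (nextIdx hm).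

Definition phiL (x : Ggen * bool) : Hgen m * bool :=
  match x with (gs, b) => (sm, b) | (gt, b) => (None, b) end.
Definition phi (w : word Ggen) : word (Hgen m) := map phiL w.

Definition psiL (x : Hgen m * bool) : word Ggen :=
  match x with
  | (Some i, b) => nseq i.+1 Ti ++ (gs, b) :: nseq i.+1 T
  | (None, b) => [:: (gt, b)] end.
Definition psi (w : word (Hgen m)) : word Ggen := flatten (map psiL w).

Lemma psi_cat u v : psi (u ++ v) = psi u ++ psi v.
Proof. by rewrite /psi map_cat flatten_cat. Qed.

Lemma HrelT : HR (nseq m (None, false)). Proof. by left. Qed.
Lemma HrelS i : HR [:: (Some i, false); (Some i, false)]. Proof. by right; exists i; left. Qed.
Lemma HrelP i : HR (flatten (nseq n [:: (Some i, false); (Some (nx i), false)])).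
Proof. by right; exists i; right; left. Qed.
Lemma HrelC i : HR [:: (None, true); (Some i, false); (None, false); (Some (nx i), false)].
Proof. by right; exists i; right; right. Qed.

Lemma GrelS : GR [:: S; S]. Proof. by left. Qed.
Lemma GrelT : GR (nseq m T). Proof. by right; left. Qed.
Lemma GrelB : GR (flatten (nseq n blk)). Proof. by right; right. Qed.

Lemma Hsinv i b r : weq HR ((Some i, b) :: r) ((Some i, false) :: r).
Proof. case: b; last reflexivity. exact: (@rel_inv _ _ (Some i) 2 r (HrelS i) isT). Qed.
Lemma Gsinv b r : weq GR ((gs, b) :: r) (S :: r).
Proof. case: b; last reflexivity. exact: (@rel_inv _ _ gs 2 r GrelS isT). Qed.

Lemma Hconj i r : weq HR ((None, true) :: (Some i, false) :: (None, false) :: r)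
   ((Some (nx i), false) :: r).
Proof.
rewrite -{1}(wrel r (HrelS (nx i))).
have := wrel ((Some (nx i), false) :: r) (HrelC i); by [].
Qed.

Lemma nx_last : nx (lastIdx hm) = Ordinal hm.
Proof. apply: val_inj => /=; by rewrite prednK // modnn. Qed.

Lemma nx_lt (i : 'I_m) (h : i.+1 < m) : nx i = Ordinal h.
Proof. apply: val_inj => /=; by rewrite modn_small. Qed.

Lemma phi_rel r v : GR r -> weq HR (phi r ++ v) v.
Proof.
case=> [->|[->|->]].
- exact: wrel (HrelS _).
- rewrite /phi map_nseq; exact: wrel HrelT.
- have E : forall k, phi (flatten (nseq k blk)) =
     flatten (nseq k [:: (sm, false); (None, true); (sm, false); (None, false)]).
    by elim=> //= k <-.
  rewrite E (flat_cong (Y := [:: (sm, false); (Some (nx (lastIdx hm)), false)])).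
    exact: wrel (HrelP _).
  move=> w /=; rewrite Hconj; reflexivity.
Qed.

Lemma phi_weq u v : weq GR u v -> weq HR (phi u) (phi v).
Proof.
elim=> {u v} [w|u v _ IH|u v w _ IH1 _ IH2|u x v|u r v Hr].
- reflexivity.
- by symmetry.
- by rewrite IH1.
- rewrite /phi !map_cat /=; apply: weq_catl.
  case: x => [[] b] /=; exact: wcancel.
- rewrite /phi !map_cat; apply: weq_catl; exact: phi_rel.
Qed.

Lemma TTi k r : weq GR (nseq k T ++ nseq k Ti ++ r) r.
Proof. exact: (nseq_cancel GR k T r). Qed.
Lemma TiT k r : weq GR (nseq k Ti ++ nseq k T ++ r) r.
Proof. exact: (nseq_cancel' GR k T r). Qed.
Lemma Tm r : weq GR (nseq m T ++ r) r.
Proof. exact: wrel GrelT. Qed.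
Lemma Tim r : weq GR (nseq m Ti ++ r) r.
Proof. rewrite -{1}(Tm r); exact: TiT. Qed.
Lemma Gss b b' r : weq GR ((gs, b) :: (gs, b') :: r) r.
Proof. rewrite Gsinv Gsinv; exact: (wrel r GrelS). Qed.

Definition sblk k b := nseq k Ti ++ (gs, b) :: nseq k T.

Lemma sblk2 k b b' r : weq GR (sblk k b ++ sblk k b' ++ r) r.
Proof. rewrite /sblk -!catA /= TTi Gss; exact: TiT. Qed.

Lemma sblk_step k w : weq GR ((sblk k false ++ sblk k.+1 false) ++ w) (nseq k Ti ++ blk ++ nseq k T ++ w).
Proof.
rewrite /sblk (nseqSr k Ti) -!catA cat_cons TTi /=; reflexivity.
Qed.

Lemma nseq_comm (x : Ggen * bool) k X : nseq k x ++ x :: X = x :: nseq k x ++ X.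
Proof. by elim: k => //= k ->. Qed.

Lemma nseq_consT k X : nseq k T ++ T :: X = nseq k.+1 T ++ X.
Proof. by rewrite nseqSr -catA. Qed.

Lemma sblkC1 k v : weq GR ((Ti :: sblk k false ++ T :: sblk k.+1 false) ++ v) v.
Proof.
have -> : (Ti :: sblk k false ++ T :: sblk k.+1 false) ++ v =
  nseq k.+1 Ti ++ S :: nseq k.+1 T ++ nseq k.+1 Ti ++ S :: nseq k.+1 T ++ v.
  by rewrite /sblk /= -!catA /= nseq_comm -catA.
rewrite TTi Gss TiT; reflexivity.
Qed.

Lemma sblkC2 v : weq GR ((Ti :: sblk m false ++ T :: sblk 1 false) ++ v) v.
Proof.
have -> : (Ti :: sblk m false ++ T :: sblk 1 false) ++ v =
  Ti :: nseq m Ti ++ S :: nseq m T ++ T :: Ti :: S :: T :: v.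
  by rewrite /sblk /= -!catA.
rewrite (wcancel GR T) Tm Gss Tim; exact: (wcancel' GR T).
Qed.

Lemma psi_nseqT k : psi (nseq k (None, false)) = nseq k T.
Proof. rewrite /psi; by elim: k => //= k ->. Qed.

Lemma psi_flat k X : psi (flatten (nseq k X)) = flatten (nseq k (psi X)).
Proof. by elim: k => //= k <-; rewrite psi_cat. Qed.

Lemma last_cases (i : 'I_m) : i.+1 < m \/ i = lastIdx hm.
Proof.
case: (ltngtP i.+1 m); [by left| by rewrite ltnNge ltn_ord|] => E; right.
apply: val_inj => /=; by rewrite -[X in _ = X.-1]E.
Qed.

Lemma Elast : (lastIdx hm).+1 = m.
Proof. by rewrite /= prednK. Qed.
Lemma Enxlast : (nx (lastIdx hm)).+1 = 1.
Proof. by rewrite nx_last. Qed.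

Lemma psi_rel r v : HR r -> weq GR (psi r ++ v) v.
Proof.
case=> [->|[i [->|[->|->]]]].
- rewrite psi_nseqT; exact: Tm.
- rewrite /= cats0 -catA; exact: (sblk2 i.+1 false false v).
- rewrite psi_flat.
  have -> : psi [:: (Some i, false); (Some (nx i), false)] = sblk i.+1 false ++ sblk (nx i).+1 false
    by rewrite /psi /= cats0.
  case: (last_cases i) => [lt|->].
  + have E : (nx i).+1 = i.+2 by rewrite (nx_lt lt).
    rewrite E (flat_conj (Y := blk) (P := nseq i.+1 Ti) (Q := nseq i.+1 T)).
    * rewrite (wrel _ GrelB); exact: TiT.
    * move=> w; exact: sblk_step.
    * exact: TTi.
    * exact: TiT.
  + rewrite Elast Enxlast (flat_cong (Y := blk)); first exact: wrel GrelB.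
    move=> w; rewrite /sblk -!catA cat_cons Tm Tim /=; reflexivity.
- have -> : psi [:: (None, true); (Some i, false); (None, false); (Some (nx i), false)] =
     Ti :: sblk i.+1 false ++ T :: sblk (nx i).+1 false by rewrite /psi /= cats0.
  case: (last_cases i) => [lt|->].
  + have E : (nx i).+1 = i.+2 by rewrite (nx_lt lt).
    rewrite E; exact: sblkC1.
  + rewrite Elast Enxlast; exact: sblkC2.
Qed.

Lemma psiL_cancel x r : weq GR (psiL x ++ psiL (inv_letter x) ++ r) r.
Proof.
case: x => [[i|] b].
- exact: (sblk2 i.+1 b (~~ b) r).
- exact: (wcancel GR (gt, b)).
Qed.

Lemma psi_weq u v : weq HR u v -> weq GR (psi u) (psi v).
Proof.
elim=> {u v} [w|u v _ IH|u v w _ IH1 _ IH2|u x v|u r v Hr].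
- reflexivity.
- by symmetry.
- by rewrite IH1.
- rewrite !psi_cat; apply: weq_catl.
  change (weq GR (psiL x ++ psiL (inv_letter x) ++ psi v) (psi v)); exact: psiL_cancel.
- rewrite !psi_cat; apply: weq_catl; exact: psi_rel.
Qed.

Lemma psi_phi u : weq GR (psi (phi u)) u.
Proof.
elim: u => [|[[] b] u IH]; first reflexivity.
- change (weq GR (sblk (lastIdx hm).+1 b ++ psi (phi u)) ((gs,b)::u)).
  rewrite IH /sblk Elast -catA cat_cons Tm Tim; reflexivity.
- change (weq GR ((gt, b) :: psi (phi u)) ((gt,b)::u)); rewrite IH; reflexivity.
Qed.

Lemma Hblk (i : nat) (h : i < m) r :
  weq HR (nseq i.+1 (None, true) ++ (sm, false) :: nseq i.+1 (None, false) ++ r)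
         ((Some (Ordinal h), false) :: r).
Proof.
elim: i h r => [|i IH] h r.
- rewrite /= Hconj nx_last; have -> : Ordinal hm = Ordinal h by apply: val_inj.
  reflexivity.
- have h' : i < m by apply: ltnW.
  rewrite [nseq i.+2 (None, false)]nseqSr -catA /=.
  have := IH h' ((None, false) :: r); rewrite /= => ->.
  rewrite Hconj (nx_lt (i := Ordinal h') h); reflexivity.
Qed.

Lemma phi_sblk k b : map phiL (sblk k b) = nseq k (None, true) ++ (sm, b) :: nseq k (None, false).
Proof. by rewrite /sblk map_cat /= !map_nseq. Qed.

Lemma phi_psi w : weq HR (phi (psi w)) w.
Proof.
elim: w => [|[[i|] b] w IH]; first reflexivity.
- change (weq HR (phi (sblk i.+1 b ++ psi w)) ((Some i, b) :: w)).
  rewrite /phi map_cat -/(phi (psi w)) IH phi_sblk -catA cat_cons (Hsinv (lastIdx hm) b) (Hsinv i b).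
  case: i => i h; exact: Hblk.
- change (weq HR ((None, b) :: phi (psi w)) ((None, b) :: w)); rewrite IH; reflexivity.
Qed.

Theorem iso_part : exists phi : word Ggen -> word (Hgen m),
     [/\ pres_iso (Grel m n) (Hrel n hm) phi,
         weq (Hrel n hm) (phi [:: (gs, false)]) [:: (Some (lastIdx hm), false)]
       & weq (Hrel n hm) (phi [:: (gt, false)]) [:: (None, false)]].
Proof.
exists phi; split; try reflexivity.
split.
- exact: phi_weq.
- move=> u v; rewrite /phi map_cat; reflexivity.
- move=> u v H; rewrite -(psi_phi u) -(psi_phi v); exact: psi_weq.
- move=> w; exists (psi w); exact: phi_psi.
Qed.
End Iso.

Lemma In_mem (X : eqType) (x : X) s : x \in s -> List.In x s.
Proof. elim: s => //= y s IH; rewrite inE => /orP [/eqP ->|/IH]; [by left|by right]. Qed.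

Lemma In_map (X Y : Type) (f : X -> Y) x s : List.In x s -> List.In (f x) (map f s).
Proof. elim: s => //= y s IH [->|/IH]; [by left|by right]. Qed.

Section Fin.
Variables (A : Type) (R : word A -> Prop) (I : finType) (nf : I -> word A).

Lemma nf_iter x : (forall i, exists j, weq R (x :: nf i) (nf j)) ->
  forall k i, exists j, weq R (nseq k x ++ nf i) (nf j).
Proof.
move=> H; elim=> [|k IH] i /=; first by exists i; reflexivity.
have [j Hj] := IH i; have [j' Hj'] := H j; exists j'; by rewrite Hj.
Qed.

Lemma nf_finite i0 : weq R [::] (nf i0) ->
  (forall x i, exists j, weq R (x :: nf i) (nf j)) -> pres_finite R.
Proof.
move=> H0 H.
have all : forall w, exists i, weq R w (nf i).
  elim=> [|x w [i Hi]]; first by exists i0.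
  have [j Hj] := H x i; exists j; by rewrite Hi.
exists (map nf (enum I)) => w; have [i Hi] := all w; exists (nf i) => //.
apply: In_map; apply: In_mem; by rewrite mem_enum.
Qed.
End Fin.

Lemma comm_of (A : Type) (R : word A -> Prop) (x y : word A) :
  (forall r, weq R (x ++ x ++ r) r) -> (forall r, weq R (y ++ y ++ r) r) ->
  (forall r, weq R (x ++ y ++ x ++ y ++ r) r) ->
  forall r, weq R (y ++ x ++ r) (x ++ y ++ r).
Proof.
move=> Hx Hy Hxy r.
rewrite -{1}(Hxy (y ++ x ++ r)) (Hy (x ++ r)) Hx; reflexivity.
Qed.

Section GFin.
Variables (m n : nat) (hm : 0 < m).
Local Notation GR := (Grel m n).

Lemma G_inv_closure (I : finType) (nf : I -> word Ggen) :
  (forall i, exists j, weq GR (S :: nf i) (nf j)) ->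
  (forall i, exists j, weq GR (T :: nf i) (nf j)) ->
  forall x i, exists j, weq GR (x :: nf i) (nf j).
Proof.
move=> HS HT [[] [|]] i //.
- have [j Hj] := HS i; exists j; by rewrite Gsinv.
- have [j Hj] := nf_iter HT m.-1 i; exists j; by rewrite (rel_inv _ (GrelT m n) hm).
Qed.

End GFin.

Lemma fin_m1 n : pres_finite (Grel 1 n).
Proof.
pose nf (b : bool) : word Ggen := if b then [:: S] else [::].
apply: (@nf_finite _ _ _ nf false); first reflexivity.
apply: (G_inv_closure (ltn0Sn 0)).
- case; [exists false; exact: (wrel [::] (GrelS 1 n)) | exists true; reflexivity].
- move=> b; exists b; exact: (wrel (nf b) (GrelT 1 n)).
Qed.

Lemma fin_n1 m (hm : 0 < m) : pres_finite (Grel m 1).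
Proof.
pose nf (p : bool * 'I_m) : word Ggen := nseq p.1 S ++ nseq p.2 T.
have Hb v : weq (Grel m 1) (S :: Ti :: S :: T :: v) v by exact: (wrel v (GrelB m 1)).
have TS r : weq (Grel m 1) (T :: S :: r) (S :: T :: r).
  have H1 : weq (Grel m 1) (Ti :: S :: T :: r) (S :: r).
    rewrite -{1}(Gss m 1 false false (Ti :: S :: T :: r)) Hb; reflexivity.
  rewrite -H1 (wcancel (Grel m 1) T); reflexivity.
apply: (@nf_finite _ _ _ nf (false, Ordinal hm)); first reflexivity.
apply: (G_inv_closure hm).
- case=> [[] b].
  + exists (false, b); exact: (Gss m 1 false false _).
  + exists (true, b); reflexivity.
- case=> a [b hb].
  have E : weq (Grel m 1) (T :: nf (a, Ordinal hb)) (nseq a S ++ nseq b.+1 T).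
    rewrite /nf /=; case: a; last reflexivity.
    rewrite /= TS; reflexivity.
  case: (ltngtP b.+1 m) => [lt| |eq]; first by exists (a, Ordinal lt).
  + by rewrite ltnNge hb.
  + exists (a, Ordinal hm); rewrite E eq -[nseq m T]cats0 (Tm m 1 [::]) /nf /= cats0; reflexivity.
Qed.

Definition ltr (c : bool) : Ggen * bool := if c then S else T.
Fixpoint alt (c : bool) (k : nat) : word Ggen :=
  if k is k'.+1 then ltr c :: alt (~~ c) k' else [::].

Lemma flat_rcons (X : Type) (x : seq X) k : flatten (nseq k.+1 x) = flatten (nseq k x) ++ x.
Proof. elim: k => [|k IH]; first by rewrite /= cats0. rewrite /= in IH *. by rewrite -catA -IH. Qed.

Lemma flat_add (X : Type) (x : seq X) a b :
  flatten (nseq (a + b) x) = flatten (nseq a x) ++ flatten (nseq b x).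
Proof. elim: a => //= a ->; by rewrite catA. Qed.

Lemma alt_even c k : alt c (k.*2) = flatten (nseq k [:: ltr c; ltr (~~ c)]).
Proof. elim: k => // k IH; by rewrite doubleS /= negbK IH. Qed.

Lemma flat_dbl (X : Type) (x : seq X) k : flatten (nseq (k.*2) x) = flatten (nseq k (x ++ x)).
Proof. elim: k => // k IH; by rewrite doubleS /= IH catA. Qed.

Section M2.
Variables (n : nat) (hn : 0 < n).
Local Notation GR := (Grel 2 n).

Lemma ll c r : weq GR (ltr c :: ltr c :: r) r.
Proof. case: c; [exact: (Gss 2 n false false r) | exact: (wrel r (GrelT 2 n))]. Qed.

Lemma Gtinv b r : weq GR ((gt, b) :: r) (T :: r).
Proof. case: b; last reflexivity. exact: (@rel_inv _ _ gt 2 r (GrelT 2 n) isT). Qed.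

Lemma pair_cancel k r :
  weq GR (flatten (nseq k [:: T; S]) ++ flatten (nseq k [:: S; T]) ++ r) r.
Proof.
elim: k r => [|k IH] r; first reflexivity.
have E : flatten (nseq k.+1 [:: S; T]) ++ r = S :: T :: (flatten (nseq k [:: S; T]) ++ r) by [].
rewrite E flat_rcons -catA /= (ll true) (ll false) IH; reflexivity.
Qed.

Lemma PP r : weq GR (flatten (nseq n [:: S; T]) ++ flatten (nseq n [:: S; T]) ++ r) r.
Proof.
rewrite catA -flat_add addnn flat_dbl.
rewrite (flat_cong (Y := blk)); first exact: wrel (GrelB 2 n).
move=> v /=; rewrite (Gtinv true); reflexivity.
Qed.

Lemma altkey c r : weq GR (alt c (n.*2) ++ r) (alt (~~ c) (n.*2) ++ r).
Proof.
have QP : weq GR (alt false (n.*2) ++ r) (alt true (n.*2) ++ r).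
  rewrite !alt_even /= -{1}(PP r) pair_cancel; reflexivity.
case: c => /=; [symmetry|]; exact: QP.
Qed.

Lemma fin_m2 : pres_finite GR.
Proof.
pose nf (p : bool * 'I_(n.*2).+1) : word Ggen := alt p.1 p.2.
have h0 : 0 < (n.*2).+1 by [].
have h1 : 1 < (n.*2).+1 by rewrite ltnS -addnn; case: n hn.
have cl : forall d i, exists j, weq GR (ltr d :: nf i) (nf j).
  move=> d [c [l hl]]; rewrite /nf /=.
  case: l hl => [|l] hl; first by exists (d, Ordinal h1); reflexivity.
  rewrite /=; case: (boolP (d == c)) => [/eqP ->|ne].
  - have hl' : l < (n.*2).+1 by apply: ltnW.
    exists (~~ c, Ordinal hl'); exact: ll.
  - have Ed : c = ~~ d by case: c d ne => [] [].
    case: (ltngtP l.+2 (n.*2).+1) => [lt| |eq].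
    + exists (d, Ordinal lt); rewrite Ed /= negbK; reflexivity.
    + by rewrite ltnNge hl.
    + have El : l.+1 = n.*2 by case: eq.
      have hl' : l < (n.*2).+1 by rewrite -El ltnW.
      exists (~~ d, Ordinal hl').
      change (weq GR (ltr d :: alt c l.+1) (alt (~~ d) l)).
      have K := altkey c [::]; rewrite !cats0 -El in K; rewrite K Ed negbK /=; exact: ll.
apply: (@nf_finite _ _ _ nf (true, Ordinal h0)); first reflexivity.
apply: (G_inv_closure (ltn0Sn 1)); [exact: (cl true) | exact: (cl false)].
Qed.
End M2.

Lemma fin_transfer m n (hm : 0 < m) : pres_finite (Hrel n hm) -> pres_finite (Grel m n).
Proof.
move=> [l Hl]; exists (map (@psi m) l) => w.
have [u Hu Hw] := Hl (phi hm w).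
exists (psi u); first exact: In_map.
rewrite -(psi_phi n hm w); exact: psi_weq.
Qed.

Section Move.
Variables (A : Type) (R : word A -> Prop).
Lemma move_past x y y' : (forall r, weq R (x :: y :: r) (y' :: x :: r)) ->
  forall (e : bool) X, weq R (x :: nseq e y ++ X) (nseq e y' ++ x :: X).
Proof. move=> H [] X /=; [exact: H | reflexivity]. Qed.
End Move.

Section H32.
Variable hm : 0 < 3.
Local Notation HR := (Hrel 2 hm).
Local Notation sl i := (Some i, false).
Local Notation Tl := (None, false).
Definition s0 : 'I_3 := Ordinal (isT : 0 < 3).
Definition s1 : 'I_3 := Ordinal (isT : 1 < 3).
Definition s2 : 'I_3 := Ordinal (isT : 2 < 3).
Lemma nx0 : nextIdx hm s0 = s1. Proof. exact: val_inj. Qed.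
Lemma nx1 : nextIdx hm s1 = s2. Proof. exact: val_inj. Qed.
Lemma nx2 : nextIdx hm s2 = s0. Proof. exact: val_inj. Qed.

Lemma Hss i r : weq HR (sl i :: sl i :: r) r.
Proof. exact: (wrel r (HrelS 2 hm i)). Qed.

Lemma Hcomm i r : weq HR (sl (nextIdx hm i) :: sl i :: r) (sl i :: sl (nextIdx hm i) :: r).
Proof.
apply: (@comm_of _ _ [:: sl i] [:: sl (nextIdx hm i)]) => r'; try exact: Hss.
exact: (wrel r' (HrelP 2 hm i)).
Qed.

Lemma HTS i r : weq HR (Tl :: sl (nextIdx hm i) :: r) (sl i :: Tl :: r).
Proof. rewrite -(Hconj 2 hm i r); exact: (wcancel HR Tl). Qed.

Lemma c10 r : weq HR (sl s1 :: sl s0 :: r) (sl s0 :: sl s1 :: r).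
Proof. rewrite -nx0; exact: Hcomm. Qed.
Lemma c21 r : weq HR (sl s2 :: sl s1 :: r) (sl s1 :: sl s2 :: r).
Proof. rewrite -nx1; exact: Hcomm. Qed.
Lemma c20 r : weq HR (sl s2 :: sl s0 :: r) (sl s0 :: sl s2 :: r).
Proof. rewrite -nx2; symmetry; exact: Hcomm. Qed.
Lemma t0 r : weq HR (Tl :: sl s0 :: r) (sl s2 :: Tl :: r).
Proof. rewrite -nx2; exact: HTS. Qed.
Lemma t1 r : weq HR (Tl :: sl s1 :: r) (sl s0 :: Tl :: r).
Proof. rewrite -nx0; exact: HTS. Qed.
Lemma t2 r : weq HR (Tl :: sl s2 :: r) (sl s1 :: Tl :: r).
Proof. rewrite -nx1; exact: HTS. Qed.

Lemma tog i (e : bool) X : weq HR (sl i :: nseq e (sl i) ++ X) (nseq (~~ e) (sl i) ++ X).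
Proof. case: e => /=; [exact: Hss | reflexivity]. Qed.

Lemma fin_H32 : pres_finite HR.
Proof.
pose nf (p : bool * bool * bool * 'I_3) : word (Hgen 3) :=
  let: (e0, e1, e2, l) := p in
  nseq e0 (sl s0) ++ nseq e1 (sl s1) ++ nseq e2 (sl s2) ++ nseq l Tl.
have cs : forall i p, exists q, weq HR (sl i :: nf p) (nf q).
  move=> i [[[e0 e1] e2] l]; rewrite /nf.
  case: i => [[|[|[|i]]] hi] //.
  - exists (~~ e0, e1, e2, l); have -> : Ordinal hi = s0 by exact: val_inj.
    exact: tog.
  - exists (e0, ~~ e1, e2, l); have -> : Ordinal hi = s1 by exact: val_inj.
    rewrite (move_past c10) tog; reflexivity.
  - exists (e0, e1, ~~ e2, l); have -> : Ordinal hi = s2 by exact: val_inj.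
    rewrite (move_past c20). rewrite (move_past c21). rewrite tog; reflexivity.
have cT : forall p, exists q, weq HR (Tl :: nf p) (nf q).
  move=> [[[e0 e1] e2] [l hl]].
  have E : weq HR (Tl :: nf (e0, e1, e2, Ordinal hl))
     (nseq e1 (sl s0) ++ nseq e2 (sl s1) ++ nseq e0 (sl s2) ++ Tl :: nseq l Tl).
    rewrite /nf (move_past t0). rewrite (move_past t1). rewrite (move_past t2).
    case: e0; last reflexivity.
    rewrite /= (move_past c20). rewrite (move_past c21). reflexivity.
  rewrite /nf in E *.
  case: (ltngtP l.+1 3) => [lt| |eq].
  - exists (e1, e2, e0, Ordinal lt); rewrite E; reflexivity.
  - by rewrite ltnNge hl.
  - exists (e1, e2, e0, s0); rewrite E /= -[Tl :: nseq l Tl]cats0.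
    have -> : Tl :: nseq l Tl = nseq 3 Tl by rewrite -eq.
    rewrite (wrel [::] (HrelT 2 hm)); reflexivity.
apply: (@nf_finite _ _ _ nf (false, false, false, s0)); first reflexivity.
move=> [[i|] []] p.
- have [q Hq] := cs i p; exists q; by rewrite Hsinv.
- exact: cs.
- have [q Hq] := nf_iter cT 2 p; exists q.
  by rewrite (@rel_inv _ _ None 3 _ (HrelT 2 hm) isT).
- exact: cT.
Qed.
End H32.

Lemma fin_32 : pres_finite (Grel 3 2).
Proof. apply: (@fin_transfer 3 2 isT); exact: fin_H32. Qed.

Import GRing.Theory.

Lemma mem_In (X : eqType) (x : X) s : List.In x s -> x \in s.
Proof. elim: s => //= y s IH [->|/IH]; rewrite inE ?eqxx // => ->; by rewrite orbT. Qed.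

Lemma not_finite (A : Type) (R : word A -> Prop) (F : word A -> int) :
  (forall u v, weq R u v -> F u = F v) -> (forall k : nat, exists w, F w = k%:Z%R) ->
  ~ pres_finite R.
Proof.
move=> HF Hk [l Hl].
have sub : {subset [seq (k%:Z%R) | k <- iota 0 (size l).+1] <= map F l}.
  move=> z /mapP [k _ ->]; have [w Hw] := Hk k; have [u Hu Hwu] := Hl w.
  rewrite -Hw (HF _ _ Hwu); apply: mem_In; exact: In_map.
have U : uniq [seq (k%:Z%R) | k <- iota 0 (size l).+1].
  rewrite map_inj_uniq ?iota_uniq //; move=> x y; by case.
have := uniq_leq_size U sub; by rewrite !size_map size_iota ltnn.
Qed.

Section Inf.
Local Open Scope ring_scope.
Variables (a b : nat).
Local Notation M := a.+2.
Local Notation N := b.+2.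
Variables (k : 'I_M -> 'I_N) (g : 'I_M -> 'I_N -> int).

Definition Yt := ('I_M * 'I_N * int)%type.
Definition beta j x : int := g j x - g j (k j - x).
Definition sf (y : Yt) : Yt := let: (j, x, z) := y in (j, k j - x, z + beta j x).
Definition tf (y : Yt) : Yt := let: (j, x, z) := y in (j + 1, x, z).
Definition tinvf (y : Yt) : Yt := let: (j, x, z) := y in (j - 1, x, z).
Definition fl (l : Ggen * bool) : Yt -> Yt :=
  match l with (gs, _) => sf | (gt, false) => tf | (gt, true) => tinvf end.
Fixpoint ev (w : word Ggen) (y : Yt) : Yt := if w is l :: w' then fl l (ev w' y) else y.

Lemma ev_cat u v y : ev (u ++ v) y = ev u (ev v y).
Proof. by elim: u => //= l u ->. Qed.

Lemma sf_invol y : sf (sf y) = y.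
Proof.
case: y => [[j x] z] /=; rewrite /beta.
have E : k j - (k j - x) = x by ring.
rewrite E; congr (_, _, _); ring.
Qed.

Lemma fl_cancel l y : fl l (fl (inv_letter l) y) = y.
Proof.
case: l => [[] []] /=; rewrite ?sf_invol //; case: y => [[j x] z] /=; congr (_, _, _); ring.
Qed.

Definition e j := k j - k (j + 1).
Definition gam j x := beta (j + 1) x + beta j (k (j + 1) - x).

Lemma ev_blk j x z : ev blk (j, x, z) = (j, x + e j, z + gam j x).
Proof. rewrite /= /e /gam addrK; congr (_, _, _); ring. Qed.

Lemma ev_powblk i j x z : ev (flatten (nseq i blk)) (j, x, z) =
  (j, x + i%:R * e j, z + \sum_(l < i) gam j (x + l%:R * e j)).
Proof.
elim: i => [|i IH]; first by rewrite /= big_ord0; congr (_, _, _); ring.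
rewrite flatten_nseqS ev_cat IH ev_blk big_ord_recr /=.
congr (_, _, _); rewrite ?mulrS; ring.
Qed.

Definition Hc j := g j = g (j + 1) \/ (forall x : 'I_N, exists t : 'I_N, k (j + 1) - x = x + t * e j).

Lemma sum_gam j x : Hc j -> \sum_(l < N) gam j (x + l%:R * e j) = 0.
Proof.
move=> H.
under eq_bigr do rewrite natr_Zp.
set E := e j; set k' := k (j + 1); set g0 := g j; set g1 := g (j + 1).
have shift : forall h : 'I_N -> int, \sum_(l < N) h (x + l * E + E) = \sum_(l < N) h (x + l * E).
  move=> h; rewrite [RHS](reindex_inj (addIr 1)) /=; apply: eq_bigr => l _; congr h; ring.
have Eg : forall l : 'I_N, gam j (x + l * E) =
   (g1 (x + l * E) - g0 (x + l * E + E)) + (g0 (k' - (x + l * E)) - g1 (k' - (x + l * E))).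
  move=> l; rewrite /gam /beta -/k' -/g0 -/g1.
  have -> : k j - (k' - (x + l * E)) = x + l * E + E by rewrite /E /e -/k'; ring.
  ring.
rewrite (eq_bigr _ (fun l _ => Eg l)) big_split /= !sumrB shift.
case: H => [H|H].
- rewrite /g1 -H -/g0; ring.
- have refl : forall h : 'I_N -> int, \sum_(l < N) h (k' - (x + l * E)) = \sum_(l < N) h (x + l * E).
    move=> h; have [t Ht] := H x.
    have inj : injective (fun l : 'I_N => t - l).
      by apply: (can_inj (g := fun l : 'I_N => t - l)) => l; ring.
    rewrite [RHS](reindex_inj inj) /=; apply: eq_bigr => l _; congr h.
    have -> : k' - (x + l * E) = (k' - x) - l * E by ring.
    rewrite /k' Ht -/E; ring.
  rewrite !refl; ring.
Qed.

Lemma natrM0 : (M%:R : 'I_M) = 0.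
Proof. by apply: val_inj; rewrite Zp_nat /= modnn. Qed.
Lemma natrN0 : (N%:R : 'I_N) = 0.
Proof. by apply: val_inj; rewrite Zp_nat /= modnn. Qed.

Lemma ev_nseqT i j x z : ev (nseq i T) (j, x, z) = (j + i%:R, x, z).
Proof.
elim: i => [|i IH]; first by rewrite /= addr0.
rewrite -[nseq i.+1 T]/(T :: nseq i T) /= IH /=; congr (_, _, _); rewrite mulrS; ring.
Qed.

Hypothesis HcA : forall j, Hc j.

Lemma ev_rel r y : Grel M N r -> ev r y = y.
Proof.
case: y => [[j x] z].
case=> [->|[->|->]].
- exact: sf_invol.
- by rewrite ev_nseqT natrM0 addr0.
- rewrite ev_powblk natrN0 mul0r addr0 (sum_gam x (HcA j)) addr0 //.
Qed.

Lemma ev_weq u v : weq (Grel M N) u v -> forall y, ev u y = ev v y.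
Proof.
elim=> {u v} [w|u v _ IH|u v w _ IH1 _ IH2|u x v|u r v Hr] y.
- by [].
- by rewrite IH.
- by rewrite IH1 IH2.
- rewrite !ev_cat; congr (ev u _); exact: fl_cancel.
- by rewrite !ev_cat (ev_rel _ Hr).
Qed.

Lemma inf_of w : (forall z, ev w (0, 0, z) = (0, 0, z + 1)) -> ~ pres_finite (Grel M N).
Proof.
move=> Hw.
apply: (@not_finite _ _ (fun u => (ev u (0, 0, 0)).2)).
- by move=> u v H; rewrite (ev_weq H).
- move=> i; exists (flatten (nseq i w)).
  suff -> : ev (flatten (nseq i w)) (0, 0, 0) = (0, 0, i%:Z) by [].
  elim: i => // i IH; rewrite flatten_nseqS ev_cat IH Hw; congr (_, _, _); by rewrite -[in RHS]addn1 PoszD.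
Qed.
End Inf.

Section W7s.
Local Open Scope ring_scope.

Lemma valS p (j : 'I_p.+2) : val (j + 1) = (j.+1 %% p.+2)%N.
Proof. by rewrite /= modnDmr addn1. Qed.

Lemma rA1 (R : comRingType) (x : R) : 1 - x = x + (x + x - 1) * (0 - 1).
Proof. ring. Qed.
Lemma rA2 (R : comRingType) (x : R) : 0 - x = x + (- (x + x)) * (1 - 0).
Proof. ring. Qed.

Section CaseA.
Variables (a b : nat).
Local Notation M := a.+4.
Local Notation N := b.+2.

Definition kA (j : 'I_M) : 'I_N := if (val j == 0)%N || (val j == 2)%N then 1 else 0.
Definition gA (j : 'I_M) : 'I_N -> int :=
  if (val j == 2)%N then (fun x => Posz (x == 0)) else (fun _ => 0).

Arguments kA : simpl never.
Arguments gA : simpl never.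

Lemma HcA_ok j : Hc kA gA j.
Proof.
have vS := valS j.
case: (boolP (val j == 1)%N) => [/eqP h1|n1].
- right => x; exists (x + x - 1).
  have k1 : kA j = 0 by rewrite /kA h1.
  have k2 : kA (j + 1) = 1 by rewrite /kA vS h1 modn_small.
  rewrite /e k1 k2; ring.
case: (boolP (val j == 2)%N) => [/eqP h2|n2].
- right => x; exists (- (x + x)).
  have k1 : kA j = 1 by rewrite /kA h2.
  have k2 : kA (j + 1) = 0 by rewrite /kA vS h2 modn_small.
  rewrite /e k1 k2; ring.
left; rewrite /gA (negbTE n2) vS.
case: (ltngtP j.+1 M) => [lt| |eq].
- by rewrite modn_small // eqSS (negbTE n1).
- by rewrite ltnNge ltn_ord.
- by rewrite eq modnn.
Qed.

Lemma infA : ~ pres_finite (Grel M N).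
Proof.
apply: (@inf_of a.+2 b kA gA HcA_ok [:: S; Ti; Ti; S; T; T]) => z.
have v2 : val (0 + 1 + 1 : 'I_M) = 2%N by rewrite valS valS.
have E1 : kA (0 + 1 + 1) = 1 by rewrite /kA v2.
have E2 : gA (0 + 1 + 1) = (fun x => Posz (x == 0)) by rewrite /gA v2.
have E3 : (0 + 1 + 1 - 1 - 1 : 'I_M) = 0 by ring.
have E4 : kA 0 = 1 by [].
have E5 : gA 0 = (fun _ => 0) by [].
rewrite /= /beta E1 E2 E3 E4 E5 /=.
have -> : (1 - 0 : 'I_N) = 1 by ring.
have -> : (1 - 1 : 'I_N) = 0 by ring.
have -> : ((1 : 'I_N) == 0) = false by apply/negP => /eqP/(congr1 val); rewrite /= modn_small.
congr (_, _, _); rewrite /=; ring.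
Qed.
End CaseA.

Section CaseB.
Variables (b : nat).
Local Notation N := b.+3.

Definition kB (j : 'I_3) : 'I_N := (val j)%:R.
Definition gB (j : 'I_3) : 'I_N -> int :=
  if (val j == 2)%N then (fun x => Posz (x == 0)) else (fun _ => 0).
Arguments kB : simpl never.
Arguments gB : simpl never.

Definition o0 : 'I_3 := Ordinal (isT : (0 < 3)%N).
Definition o1 : 'I_3 := Ordinal (isT : (1 < 3)%N).
Definition o2 : 'I_3 := Ordinal (isT : (2 < 3)%N).

Lemma HcB_ok j : Hc kB gB j.
Proof.
right => x.
case: j => [[|[|[|j]]] hj] //.
- have -> : Ordinal hj = o0 by exact: val_inj.
  rewrite /e (_ : o0 + 1 = o1); last exact: val_inj.
  exists (x + x - 1); rewrite /kB /=; ring.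
- have -> : Ordinal hj = o1 by exact: val_inj.
  rewrite /e (_ : o1 + 1 = o2); last exact: val_inj.
  exists (x + x - 2%:R); rewrite /kB /=; ring.
- have -> : Ordinal hj = o2 by exact: val_inj.
  rewrite /e (_ : o2 + 1 = o0); last exact: val_inj.
  exists (- x); rewrite /kB /=; ring.
Qed.

Lemma n10 : ((1 : 'I_N) == 0) = false.
Proof. by apply/negP => /eqP/(congr1 val); rewrite /= modn_small. Qed.
Lemma n20 : ((2%:R : 'I_N) == 0) = false.
Proof. apply/negP => /eqP/(congr1 val); by rewrite Zp_nat /= modn_small. Qed.

Definition vB := [:: S; Ti; S; Ti; S; T; T].

Lemma J2 : (0 + 1 + 1 : 'I_3) = o2. Proof. exact: val_inj. Qed.
Lemma J1 : (o2 - 1 : 'I_3) = o1. Proof. exact: val_inj. Qed.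
Lemma J0 : (o1 - 1 : 'I_3) = o0. Proof. exact: val_inj. Qed.

Lemma evB1 z : ev kB gB vB (0, 0, z) = (0, 1, z + 1).
Proof.
rewrite /= J2 J1 J0 /beta /kB /gB /= subr0 n20.
have -> : o0 = 0 by exact: val_inj.
congr (_, _, _); [ring | rewrite /=; ring].
Qed.

Lemma evB2 z : ev kB gB vB (0, 1, z) = (0, 0, z).
Proof.
rewrite /= J2 J1 J0 /beta /kB /gB /=.
have -> : (2%:R - 1 : 'I_N) = 1 by ring.
have -> : (1 - 1 : 'I_N) = 0 by ring.
rewrite n10 subrr.
have -> : o0 = 0 by exact: val_inj.
congr (_, _, _); rewrite /=; ring.
Qed.

Lemma infB : ~ pres_finite (Grel 3 N).
Proof.
apply: (@inf_of 1 b.+1 kB gB HcB_ok (vB ++ vB)) => z.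
by rewrite ev_cat evB1 evB2.
Qed.
End CaseB.

End W7s.


Theorem proposition4p11 (m n : nat) (hm : 0 < m) (hn : 0 < n) :
  (exists phi : word Ggen -> word (Hgen m),
     [/\ pres_iso (Grel m n) (Hrel n hm) phi,
         weq (Hrel n hm) (phi [:: (gs, false)]) [:: (Some (lastIdx hm), false)]
       & weq (Hrel n hm) (phi [:: (gt, false)]) [:: (None, false)]]) /\
  (pres_finite (Grel m n) <->
     m = 1 \/ m = 2 \/ n = 1 \/ (m = 3 /\ n = 2)).
Proof.
split; first exact: (iso_part n hm).
split.
- case: m hm => [//|[|[|[|a]]]] _ Hf; [by left | by right; left | |].
  + case: n hn Hf => [//|[|[|b]]] _ Hf; [by right; right; left | by right; right; right |].
    exfalso; exact: (infB Hf).
  + case: n hn Hf => [//|[|b]] _ Hf; first by right; right; left.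
    exfalso; exact: (infA Hf).
- case=> [->|[->|[->|[-> ->]]]].
  + exact: fin_m1.
  + exact: fin_m2.
  + exact: fin_n1.
  + exact: fin_32.
Qed.
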